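(* Let $F \leq F' \leq \hat F \leq \mathrm{Sym}(\Omega)$ be permutation groups (so $F'$ stabilizes the orbits of $F$), and assume that for every $a\in\Omega$ the point stabilizer $F_a$ is equal to its normalizer in $F'_a$. Then for every compact open subgroup $K$ of $U(F)$, one has $\mathrm{Comm}_{U(F')}(K) = G(F,F')$.
   Context: Standing notation. $\Omega$ is a finite set with $d=|\Omega|\geq 3$, $\mathcal{T}_d$ is the $d$-regular tree with vertex set $V$ and set $E$ of non-oriented edges, and $\mathrm{Aut}(\mathcal{T}_d)$ carries the permutation topology. Fix a coloring $c:E\to\Omega$ such that for every vertex $v$ its restriction $c_v$ to the set $E(v)$ of edges containing $v$ is a bijection onto $\Omega$. For $g\in\mathrm{Aut}(\mathcal{T}_d)$ and $v\in V$, the local permutation is $\sigma(g,v)=c_{gv}\circ g_v\circ c_v^{-1}\in\mathrm{Sym}(\Omega)$, where $g_v:E(v)\to E(gv)$ is induced by $g$. For $F\leq\mathrm{Sym}(\Omega)$: $U(F)=\{g:\sigma(g,v)\in F \ \forall v\}$ (a closed subgroup of $\mathrm{Aut}(\mathcal{T}_d)$, with the induced topology); $G(F)=\{g:\sigma(g,v)\in F \text{ for all but finitely many } v\}$; $\hat F$ is the subgroup of permutations preserving each $F$-orbit. For $F\leq F'\leq\hat F$, $G(F,F')=G(F)\cap U(F')$. $F_a$, $F'_a$ are stabilizers of $a$. For a profinite group $K$ contained in a group $L$, the relative commensurator $\mathrm{Comm}_L(K)$ is the set of $g\in L$ such that there are open subgroups $K_1,K_2\leq K$ with $gK_1g^{-1}=K_2$.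 *)

(* Defs.v *)
From HB Require Import structures.
From mathcomp Require Import all_boot all_fingroup.
From Stdlib Require Import Relations.Relation_Operators.
From Stdlib Require List.

Set Implicit Arguments.
Unset Strict Implicit.
Unset Printing Implicit Defensive.

Section TreeDefs.

Variables (V : Type) (adj : V -> V -> Prop).

Definition simple_graph : Prop :=
  (forall u w, adj u w -> adj w u) /\ (forall u, ~ adj u u).

Definition connected : Prop := forall u w, clos_refl_trans V adj u w.

(* No closed walk f 0, ..., f n = f 0 (n >= 1) without (internal) backtracking;
   for a simple graph this is equivalent to having no cycle. *)
Definition acyclic : Prop :=
  forall (n : nat) (f : nat -> V), (0 < n)%N -> f n = f 0 ->
    (forall i, (i < n)%N -> adj (f i) (f i.+1)) ->
    exists i, (i.+2 <= n)%N /\ f i = f i.+2.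

Definition is_tree : Prop := simple_graph /\ connected /\ acyclic.

Variable Omega : finType.
Variable c : V -> V -> Omega.   (* colour of the edge {u,w} (meaningful when adj u w) *)

Definition legal_coloring : Prop :=
  (forall u w, adj u w -> c u w = c w u) /\
  (forall v (a : Omega), exists w, (adj v w /\ c v w = a) /\
       forall w', adj v w' /\ c v w' = a -> w' = w).

Definition is_aut (g : V -> V) : Prop :=
  bijective g /\ forall u w, adj u w <-> adj (g u) (g w).

(* sigma(g,v) \in F, where sigma(g,v) = c_{gv} o g_v o c_v^{-1}. *)
Definition local_perm_in (F : {set {perm Omega}}) (g : V -> V) (v : V) : Prop :=
  exists2 p, p \in F & forall w, adj v w -> c (g v) (g w) = p (c v w).

Definition finite_set (P : V -> Prop) : Prop :=
  exists s : seq V, forall v, P v -> List.In v s.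

Definition U_ (F : {set {perm Omega}}) (g : V -> V) : Prop :=
  is_aut g /\ forall v, local_perm_in F g v.

Definition G_ (F : {set {perm Omega}}) (g : V -> V) : Prop :=
  is_aut g /\ finite_set (fun v => ~ local_perm_in F g v).

Definition G2_ (F F' : {set {perm Omega}}) (g : V -> V) : Prop :=
  G_ F g /\ U_ F' g.

Definition agree_on (g h : V -> V) (S : seq V) : Prop :=
  forall v, List.In v S -> g v = h v.

Definition open_in (X O : (V -> V) -> Prop) : Prop :=
  (forall g, O g -> X g) /\
  forall g, O g -> exists S : seq V, forall h, X h -> agree_on h g S -> O h.

Definition compact (K : (V -> V) -> Prop) : Prop :=
  forall (I : Type) (O : I -> (V -> V) -> Prop),
    (forall i, open_in K (O i)) ->
    (forall g, K g -> exists i, O i g) ->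
    exists J : seq I, forall g, K g -> exists i, List.In i J /\ O i g.

Definition subgroup_of (X K : (V -> V) -> Prop) : Prop :=
  (forall g, K g -> X g) /\ K (fun v => v) /\
  (forall g h, K g -> K h -> K (fun v => g (h v))) /\
  (forall g, K g -> exists2 h, K h &
      (forall v, g (h v) = v) /\ (forall v, h (g v) = v)).

Definition Comm (L K : (V -> V) -> Prop) (g : V -> V) : Prop :=
  L g /\ exists K1 K2 : (V -> V) -> Prop,
    subgroup_of K K1 /\ open_in K K1 /\ subgroup_of K K2 /\ open_in K K2 /\
    forall k, K2 k <-> exists2 h, K1 h & forall v, k (g v) = g (h v).

End TreeDefs.

Definition hatF (Omega : finType) (F : {set {perm Omega}}) : {set {perm Omega}} :=
  [set p : {perm Omega} | [forall a, p a \in orbit 'P F a]].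

(* Main.v *)
Require Import Defs.
From HB Require Import structures.
From mathcomp Require Import all_boot all_fingroup zify.
From Stdlib Require Import ClassicalEpsilon Classical Relations Operators_Properties.
From Stdlib Require List.

Set Implicit Arguments.
Unset Strict Implicit.
Unset Printing Implicit Defensive.

Section Grp.
Local Open Scope group_scope.
Lemma grp (Omega : finType) (F F' : {group {perm Omega}}) (s : {perm Omega}) (a : Omega) :
  F \subset F' -> F' \subset hatF F -> s \in F' ->
  'N_('C_F'[a | 'P])('C_F[a | 'P]) = 'C_F[a | 'P] ->
  (forall x, x \in F -> x a = a -> exists2 q, q \in F & forall b, s (x b) = q (s b)) ->
  s \in F.
Proof.
move=> sFF' sF'h sF' Hn Hq.
have : s \in hatF F by apply: (subsetP sF'h).
rewrite inE => /forallP /(_ a) /orbitP [f fF] fa. rewrite /= apermE in fa.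
set t := s * f^-1.
have ta : t a = a by rewrite /t permM -fa permK.
have tF' : t \in F' by rewrite groupM ?groupV // (subsetP sFF').
have tC : t \in 'C_F'[a | 'P] by rewrite inE tF' /=; apply/astab1P; rewrite /= ?apermE.
have sub : 'C_F[a | 'P] :^ t \subset 'C_F[a | 'P].
  apply/subsetP => y; rewrite mem_conjg; move Ex: (y ^ t^-1) => x.
  move=> /setIP [xF /astab1P] xa; rewrite /= ?apermE in xa.
  have Ey : y = x ^ t by rewrite -Ex conjgKV.
  have [q qF Eq] := Hq _ xF xa.
  have Eyb : forall b, y b = f^-1 (q (f b)).
    by move=> b; rewrite Ey /conjg !permM /t invMg invgK !permM Eq permKV.
  rewrite inE; apply/andP; split.
    have -> : y = f * q * f^-1 by apply/permP => b; rewrite Eyb !permM.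
    by rewrite groupM ?groupV ?groupM.
  by apply/astab1P; rewrite /= ?apermE Eyb fa -Eq xa -fa permK.
have tN : t \in 'N('C_F[a | 'P]).
  apply/normP; apply/eqP; rewrite eqEcard sub cardJg leqnn //.
have : t \in 'N_('C_F'[a | 'P])('C_F[a | 'P]) by rewrite inE tC tN.
rewrite Hn => /setIP [tF _].
by rewrite -(mulgKV f s) groupM.
Qed.

End Grp.

Lemma In_mem (T : eqType) (y : T) (s : seq T) : y \in s -> List.In y s.
Proof.
elim: s => [//|z s IH]; rewrite in_cons => /orP [/eqP ->|H]; [by left | right; exact: IH].
Qed.

Section Tree.
Variables (V : Type) (adj : V -> V -> Prop) (Omega : finType) (c : V -> V -> Omega).
Hypothesis Htree : is_tree adj.
Hypothesis Hcol : legal_coloring adj c.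

Definition step (v : V) (a : Omega) : V :=
  proj1_sig (constructive_indefinite_description _ (Hcol.2 v a)).

Lemma stepP v a : (adj v (step v a) /\ c v (step v a) = a) /\
  (forall w', adj v w' /\ c v w' = a -> w' = step v a).
Proof. rewrite /step; case: constructive_indefinite_description => w /= H; exact H. Qed.

Lemma step_adj v a : adj v (step v a). Proof. by case: (stepP v a) => [[]]. Qed.
Lemma step_col v a : c v (step v a) = a. Proof. by case: (stepP v a) => [[]]. Qed.
Lemma step_uniq v w : adj v w -> w = step v (c v w).
Proof. move=> H; case: (stepP v (c v w)) => _; apply; by split. Qed.

Lemma adj_sym u w : adj u w -> adj w u.
Proof. by case: Htree => [[H _] _]; apply: H. Qed.

Lemma col_sym u w : adj u w -> c u w = c w u.
Proof. by case: Hcol => H _; apply: H. Qed.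

Lemma stepK v a : step (step v a) a = v.
Proof.
have H1 := step_adj v a; have H2 := adj_sym H1.
rewrite [in RHS](step_uniq H2) -col_sym // step_col //.
Qed.

Lemma step_inj v w a : step v a = step w a -> v = w.
Proof. by move=> E; rewrite -(stepK v a) E stepK. Qed.

Lemma step_back w b b' : step (step w b) b' = w -> b = b'.
Proof.
move=> E. have H1 := step_adj w b.
have H2 := step_col (step w b) b'. rewrite E in H2.
by rewrite -H2 -col_sym // step_col.
Qed.

Definition walk (z : V) (l : seq Omega) : V := foldr (fun b y => step y b) z l.

Definition red (l : seq Omega) := sorted (fun a b : Omega => a != b) l.

Lemma red_behead b l : red (b :: l) -> red l.
Proof. exact: path_sorted. Qed.

Lemma red_drop j l : red l -> red (drop j l).
Proof.
elim: l j => [|b l IH] [|j] //= H. apply: IH. exact: red_behead H.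
Qed.

Lemma no_closed z L : L != [::] -> red L -> walk z L = z -> False.
Proof.
case EL: L => [//|d L1] _; rewrite -EL => RL WL.
case: Htree => _ [_ Hac].
set n := size L.
pose f i := walk z (drop (n - i) L).
have n0 : (0 < n)%N by rewrite /n EL.
have fS i : (i < n)%N -> f i.+1 = step (f i) (nth d L (n - i.+1)).
  move=> Hi; rewrite /f.
  have -> : n - i = (n - i.+1).+1 by lia.
  by rewrite (drop_nth d) //; rewrite /n in Hi *; lia.
have [i [Hi E]] : exists i, (i.+2 <= n)%N /\ f i = f i.+2.
  apply: Hac => //.
    by rewrite /f subnn drop0 subn0 drop_size.
  by move=> i Hi; rewrite fS //; apply: step_adj.
rewrite fS // fS 1?ltnW // in E.
have Eb := step_back (esym E).
have R2 := red_drop (n - i.+2) RL.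
rewrite (drop_nth d) in R2; last by rewrite /n; lia.
rewrite (drop_nth d) in R2; last by rewrite /n; lia.
case/andP: R2 => /eqP H _; apply: H.
have -> : (n - i.+2).+1 = n - i.+1 by lia.
by rewrite Eb.
Qed.

Lemma walk_cat z l1 l2 : walk z (l1 ++ l2) = walk (walk z l2) l1.
Proof. by rewrite /walk foldr_cat. Qed.

Lemma walk_rev z l : walk (walk z l) (rev l) = z.
Proof.
elim: l z => [//|b l IH] z.
rewrite rev_cons -cats1 walk_cat /= stepK. exact: IH.
Qed.

Lemma red_rev l : red l -> red (rev l).
Proof.
rewrite /red rev_sorted; case: l => //= x s.
by rewrite (@eq_path _ _ (fun a b : Omega => a != b)) // => a b; rewrite eq_sym.
Qed.

Lemma walk_uniq v0 l1 l2 : red l1 -> red l2 -> walk v0 l1 = walk v0 l2 -> l1 = l2.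
Proof.
elim: l1 l2 => [|b1 q1 IH] [|b2 q2] // R1 R2 E.
- by exfalso; apply: (@no_closed v0 (b2 :: q2)) => //; rewrite -E.
- by exfalso; apply: (@no_closed v0 (b1 :: q1)).
have [eb|neb] := eqVneq b1 b2.
  subst b2; congr (_ :: _); apply: IH; first exact: red_behead R1.
    exact: red_behead R2.
  exact: step_inj E.
exfalso; apply: (@no_closed v0 (rev (b2 :: q2) ++ b1 :: q1)) => //.
  by case: (rev _).
  rewrite rev_cons -cats1 -catA /= /red sorted_cat_cons -rev_cons.
  have -> : sorted (fun a b : Omega => a != b) (rev (b2 :: q2)) by apply: red_rev.
  by rewrite /= eq_sym neb; exact: R1.
by rewrite walk_cat E walk_rev.
Qed.

Definition wstep (l : seq Omega) (b : Omega) :=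
  if l is b' :: q then (if b' == b then q else b :: l) else [:: b].

Lemma walk_wstep z l b : walk z (wstep l b) = step (walk z l) b.
Proof. case: l => [//|b' q] /=; case: eqP => [->|_] //=; by rewrite stepK. Qed.

Lemma red_wstep l b : red l -> red (wstep l b).
Proof.
case: l => [//|b' q] /= R; case: eqP => [_|ne]; first exact: red_behead R.
by rewrite /red /= R andbT; apply/eqP => E; apply: ne; rewrite E.
Qed.

Lemma walk_ex v0 w : exists l, red l /\ walk v0 l = w.
Proof.
case: Htree => _ [Hc _].
have := clos_rt_rtn1 _ _ _ _ (Hc v0 w).
elim => [|y z Hyz _ [l [Rl Wl]]]; first by exists [::].
exists (wstep l (c y z)); split; first exact: red_wstep.
by rewrite walk_wstep Wl -step_uniq.
Qed.

Definition word v0 w : seq Omega := proj1_sig (constructive_indefinite_description _ (walk_ex v0 w)).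

Lemma wordP v0 w : red (word v0 w) /\ walk v0 (word v0 w) = w.
Proof. rewrite /word; case: constructive_indefinite_description => l /= H; exact H. Qed.

Lemma word_red v0 w : red (word v0 w). Proof. by case: (wordP v0 w). Qed.
Lemma word_walk v0 w : walk v0 (word v0 w) = w. Proof. by case: (wordP v0 w). Qed.
Lemma walk_word v0 l : red l -> word v0 (walk v0 l) = l.
Proof. move=> R; apply: (@walk_uniq v0) => //; [exact: word_red | exact: word_walk]. Qed.
Lemma word_step v0 w b : word v0 (step w b) = wstep (word v0 w) b.
Proof.
apply: (@walk_uniq v0); first exact: word_red.
  apply: red_wstep; exact: word_red.
by rewrite word_walk walk_wstep word_walk.
Qed.


Section Construct.
Variables (v0 : V) (a : Omega) (q : seq Omega) (x : {perm Omega}).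
Hypothesis Hx : x a = a.
Let p := a :: q.

Definition Hw (y : {perm Omega}) (l : seq Omega) :=
  if suffix p l then map y (take (size l - size p) l) ++ p else l.

Lemma Hw_cat y r : Hw y (r ++ p) = map y r ++ p.
Proof.
by rewrite /Hw suffix_suffix size_cat addnK take_size_cat.
Qed.

Lemma Hw_nsuf y l : ~~ suffix p l -> Hw y l = l.
Proof. by rewrite /Hw => /negbTE ->. Qed.

Lemma suffix_cons_nsuf b l : suffix p (b :: l) -> ~~ suffix p l -> p = b :: l.
Proof.
move=> /suffixP [[|s0 s'] /= E] N; first by rewrite E.
by case: E => _ E; rewrite E suffix_suffix in N.
Qed.

Definition tau (l : seq Omega) : {perm Omega} := if suffix p l then x else 1%g.

Lemma Hw_wstep l b : Hw x (wstep l b) = wstep (Hw x l) (tau l b).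
Proof.
rewrite /tau; case: (boolP (suffix p l)) => S.
  case/suffixP: S => r ->.
  case: r => [|b' r'] /=.
    have -> : Hw x p = p by exact: (Hw_cat x [::]).
    rewrite /p /=.
    have -> : (a == x b) = (a == b) by rewrite -{1}Hx (inj_eq (@perm_inj _ x)).
    case: eqP => [_|_].
      have NS : ~~ suffix p q.
        apply/negP => /suffixP [s E].
        by have := congr1 size E; rewrite size_cat /p /=; lia.
      by rewrite Hw_nsuf.
    exact: (Hw_cat x [:: b]).
  have E1 := Hw_cat x (b' :: r'); rewrite /= in E1; rewrite E1 /=.
  rewrite (inj_eq (@perm_inj _ x)).
  case: eqP => _; first by rewrite Hw_cat.
  exact: (Hw_cat x [:: b, b' & r']).
rewrite perm1 (Hw_nsuf _ S).
case: l S => [|b' l] S /=.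
  case: (boolP (suffix p [:: b])) => S2; last by rewrite Hw_nsuf.
  by move: (Hw_cat x [::]) => /=; rewrite (suffix_cons_nsuf S2 S).
case: eqP => _.
  rewrite Hw_nsuf //; apply: contra S => S'.
  by rewrite -cat1s; apply: suffix_catr.
case: (boolP (suffix p [:: b, b' & l])) => S2; last by rewrite Hw_nsuf.
by move: (Hw_cat x [::]) => /=; rewrite (suffix_cons_nsuf S2 S).
Qed.

Lemma red_Hw l : red l -> red (Hw x l).
Proof.
case: (boolP (suffix p l)) => S; last by rewrite Hw_nsuf.
case/suffixP: S => r ->; rewrite Hw_cat.
elim: r => [//|b r IH] R /=.
have R' : red (r ++ p) by apply: red_behead R.
move: R (IH R'); case: r {IH R'} => [|y t] /=.
  rewrite /p /red /= => /andP [ba _] ->; rewrite andbT.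
  by rewrite -Hx (inj_eq (@perm_inj _ x)).
rewrite /red /= => /andP [ba _] ->; rewrite andbT.
by rewrite (inj_eq (@perm_inj _ x)).
Qed.

Lemma Hw_inv l : Hw x^-1 (Hw x l) = l.
Proof.
case: (boolP (suffix p l)) => S; last by rewrite !Hw_nsuf.
case/suffixP: S => r ->; rewrite !Hw_cat -map_comp.
congr (_ ++ _); rewrite -[RHS]map_id; apply: eq_map => y /=; exact: permK.
Qed.

Definition hmap (y : {perm Omega}) (z : V) := walk v0 (Hw y (word v0 z)).

Lemma hmap_step z b : hmap x (step z b) = step (hmap x z) (tau (word v0 z) b).
Proof. by rewrite /hmap word_step Hw_wstep walk_wstep. Qed.

Lemma word_hmap z : word v0 (hmap x z) = Hw x (word v0 z).
Proof. apply: walk_word; apply: red_Hw; exact: word_red. Qed.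

Lemma hmap_inv z : hmap x^-1 (hmap x z) = z.
Proof. by rewrite /hmap -/(hmap x z) word_hmap Hw_inv word_walk. Qed.

Lemma hmap_fix z : ~~ suffix p (word v0 z) -> hmap x z = z.
Proof. by move=> S; rewrite /hmap Hw_nsuf // word_walk. Qed.

Lemma hmap_u : red p -> hmap x (walk v0 p) = walk v0 p.
Proof.
move=> R; rewrite /hmap walk_word //.
by have := Hw_cat x [::]; rewrite /= => ->.
Qed.

Lemma tau_u : red p -> tau (word v0 (walk v0 p)) = x.
Proof. by move=> R; rewrite walk_word // /tau suffix_refl. Qed.

Lemma hmap_lp z w : adj z w -> c (hmap x z) (hmap x w) = tau (word v0 z) (c z w).
Proof. by move=> A; rewrite {1}(step_uniq A) hmap_step step_col. Qed.

Lemma hmap_adj z w : adj z w -> adj (hmap x z) (hmap x w).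
Proof. by move=> A; rewrite (step_uniq A) hmap_step; apply: step_adj. Qed.

End Construct.

Lemma hmap_aut v0 a q (x : {perm Omega}) : x a = a -> is_aut adj (hmap v0 a q x).
Proof.
move=> Hx.
have Hx' : x^-1%g a = a by rewrite -{1}Hx permK.
split.
  exists (hmap v0 a q x^-1%g) => z; first exact: hmap_inv.
  by have := hmap_inv v0 q Hx' z; rewrite invgK.
move=> z w; split; first exact: hmap_adj.
by move=> A; have := hmap_adj v0 q Hx' A; rewrite !(hmap_inv v0 q Hx).
Qed.


Definition LP (g : V -> V) v (s : {perm Omega}) :=
  forall w, adj v w -> c (g v) (g w) = s (c v w).

Lemma LP_fix h v : h v = v -> (forall w, adj v w -> h w = w) -> LP h v 1%g.
Proof. by move=> Hv Hw w A; rewrite Hv Hw // perm1. Qed.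

Lemma LP_conj1 g h k v p q r :
  (forall y w, adj y w -> adj (g y) (g w)) ->
  (forall y w, adj y w -> adj (h y) (h w)) ->
  (forall y, k (g y) = g (h y)) ->
  LP g v p -> LP g (h v) r -> LP k (g v) q -> LP h v (p * q * r^-1)%g.
Proof.
move=> gA hA Ekg Lp Lr Lq w A.
have E1 := Lr _ (hA _ _ A).
rewrite -!Ekg Lq ?Lp // in E1; last by apply: gA.
by rewrite !permM E1 permK.
Qed.

Lemma LP_conj2 g gi h k v p r s :
  (forall y w, adj (g y) (g w) -> adj y w) -> cancel gi g ->
  (forall y w, adj y w -> adj (h y) (h w)) ->
  (forall y, k (g y) = g (h y)) ->
  LP g v p -> LP g (h v) r -> LP h v s -> LP k (g v) (p^-1 * s * r)%g.
Proof.
move=> gA giK hA Ekg Lp Lr Ls w' A.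
rewrite -(giK w') in A *.
have A' := gA _ _ A.
rewrite !Ekg Lr ?Ls //; last exact: hA.
by rewrite !permM Lp // permK.
Qed.

Lemma aut_inj g : is_aut adj g -> injective g.
Proof. by case=> [[gi gK _] _]; apply: can_inj gK. Qed.

Lemma aut_comp f g : is_aut adj f -> is_aut adj g -> is_aut adj (fun v => f (g v)).
Proof.
move=> [[fi fK fKV] fA] [[gi gK gKV] gA]; split.
  by exists (fun v => gi (fi v)) => v /=; rewrite ?fK ?gK ?gKV ?fKV.
by move=> u w; rewrite gA fA.
Qed.

Lemma aut_inv g gi : is_aut adj g -> cancel g gi -> cancel gi g -> is_aut adj gi.
Proof.
move=> [_ gA] gK gKV; split; first by exists g.
by move=> u w; rewrite (gA (gi u) (gi w)) !gKV.
Qed.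

Lemma aut_ext f g : (forall v, f v = g v) -> is_aut adj g -> is_aut adj f.
Proof.
move=> E [[gi gK gKV] gA]; split.
  by exists gi => v; rewrite ?E ?gK // -E gKV.
by move=> u w; rewrite !E gA.
Qed.

Local Open Scope group_scope.
Lemma main (HV : inhabited V)
  (F F' : {group {perm Omega}})
  (HFF' : F \subset F') (HF'hat : F' \subset hatF F)
  (Hnorm : forall a : Omega,
      'N_('C_F'[a | 'P])('C_F[a | 'P]) = 'C_F[a | 'P])
  (K : (V -> V) -> Prop)
  (HKsub : subgroup_of (U_ adj c F) K)
  (HKopen : open_in (U_ adj c F) K) :
  forall g : V -> V, Comm (U_ adj c F') K g <-> G2_ adj c F F' g.
Proof.
move=> g.
case: (HKsub) => [KU [Kid [Kcomp Kinv]]].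
case: HKopen => [_ Kop].
have [S0 HS0] := Kop _ Kid.
split.
- case=> [[gaut gF'] [K1 [K2 [[K1K [K1id _]] [[_ K1op] [[K2K _] [_ HK]]]]]]].
  have [S1 HS1] := K1op _ K1id.
  case: HV => v0.
  split; last by split.
  split => //.
  pose Z := v0 :: List.flat_map (fun s => List.map (fun i => walk v0 (drop i (word v0 s)))
              (iota 0 (size (word v0 s)))) (S0 ++ S1).
  exists Z => u Hbad; apply: NNPP => nZ; apply: Hbad.
  have [s sF' Ls] := gF' u.
  case Ep: (word v0 u) => [|a q0].
    by exfalso; apply: nZ; left; rewrite -(word_walk v0 u) Ep.
  have Rp : red (a :: q0) by rewrite -Ep word_red.
  have Eu : walk v0 (a :: q0) = u by rewrite -Ep word_walk.
  exists s => //.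
  apply: (grp HFF' HF'hat sF' (Hnorm a)) => x xF xa.
  pose h := hmap v0 a q0 x.
  have haut : is_aut adj h := hmap_aut v0 q0 xa.
  have hU : U_ adj c F h.
    split=> // z; exists (tau a q0 x (word v0 z)).
      by rewrite /tau; case: suffix => //; exact: group1.
    by move=> w A; apply: hmap_lp.
  have hfix : forall s0, List.In s0 (S0 ++ S1) -> h s0 = s0.
    move=> s0 Hs0; apply: hmap_fix; apply/negP => /suffixP [r Er].
    apply: nZ; right; apply/List.in_flat_map; exists s0; split => //.
    apply/List.in_map_iff; exists (size r); split.
      by rewrite Er drop_size_cat // Eu.
    by apply: In_mem; rewrite mem_iota /= Er size_cat /=; lia.
  have hK : K h.
    by apply: HS0 => // v Hv; apply: hfix; apply/List.in_app_iff; left.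
  have hK1 : K1 h.
    by apply: HS1 => // v Hv; apply: hfix; apply/List.in_app_iff; right.
  case: (gaut) => [[ginv gK gKV] gA].
  pose k := fun w => g (h (ginv w)).
  have kK2 : K2 k by apply/HK; exists h => // v; rewrite /k gK.
  have kU : U_ adj c F k by apply: KU; apply: K2K.
  have [q qF Lq] := kU.2 (g u).
  exists q => // b.
  have hu : h u = u by rewrite -Eu /h hmap_u.
  have Auw := step_adj u b.
  have Lx : c u (h (step u b)) = x b.
    by have := hmap_lp v0 q0 xa Auw; rewrite -/h hu Ep /tau suffix_refl step_col.
  have Ahw : adj u (h (step u b)) by rewrite -{1}hu; apply: (proj1 (haut.2 _ _)).
  have E1 := Ls _ Ahw.
  have E2 := Lq _ (proj1 (gA _ _) Auw).
  rewrite /k !gK hu in E2.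
  have E3 := Ls _ Auw.
  by rewrite step_col in E3; rewrite -Lx -E1 E2 E3.
- case=> [[gaut [Bd HBd]] [_ gF']].
  split; first by split.
  case: (gaut) => [[ginv gK gKV] gA].
  have gA' : forall y w, adj y w -> adj (g y) (g w) by move=> y w A; exact: (proj1 (gA y w) A).
  have gR : forall y w, adj (g y) (g w) -> adj y w by move=> y w A; exact: (proj2 (gA y w) A).
  have good : forall v, ~ List.In v Bd -> local_perm_in adj c F g v.
    by move=> v nv; apply: NNPP => H; apply: nv; apply: HBd.
  pose B := S0 ++ List.map ginv S0 ++ Bd ++
            List.flat_map (fun v => List.map (step v) (enum Omega)) Bd.
  have nbr : forall v, List.In v Bd -> forall w, adj v w -> List.In w B.
    move=> v Hv w A; rewrite /B (step_uniq A).
    do 3 (apply/List.in_app_iff; right).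
    apply/List.in_flat_map; exists v; split => //.
    by apply/List.in_map_iff; exists (c v w); split => //; apply: In_mem; rewrite mem_enum.
  have BdB : forall v, List.In v Bd -> List.In v B.
    by move=> v Hv; rewrite /B; do 2 (apply/List.in_app_iff; right); apply/List.in_app_iff; left.
  have fixsub : forall S, subgroup_of K (fun h => K h /\ agree_on h (fun v => v) S) /\
                           open_in K (fun h => K h /\ agree_on h (fun v => v) S).
    move=> S; split; last first.
      split; first by move=> h [].
      move=> h [hK hS]; exists S => h2 h2K Ag; split => // v Hv.
      by rewrite Ag // hS.
    split; first by move=> h [].
    split; first by split.
    split.
      move=> h1 h2 [h1K h1S] [h2K h2S]; split; first exact: Kcomp.
      by move=> v Hv /=; rewrite h2S // h1S.
    move=> h [hK hS]; have [h' h'K [hh' h'h]] := Kinv _ hK.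
    exists h' => //; split => // v Hv.
    by rewrite -{1}(hS v Hv) h'h.
  exists (fun h => K h /\ agree_on h (fun v => v) B),
         (fun h => K h /\ agree_on h (fun v => v) (List.map g B)).
  have [sg1 op1] := fixsub B.
  have [sg2 op2] := fixsub (List.map g B).
  do 4 (split => //).
  move=> k; split.
  + move=> [kK kB].
    have kU := KU _ kK.
    pose h := fun v => ginv (k (g v)).
    have hB : forall v, List.In v B -> h v = v.
      by move=> v Hv; rewrite /h kB ?gK //; apply: List.in_map.
    have haut : is_aut adj h.
      apply: (@aut_comp ginv (fun v => k (g v))); first exact: aut_inv gK gKV.
      exact: aut_comp kU.1 gaut.
    have hU : U_ adj c F h.
      split => // v.
      case: (classic (List.In v Bd)) => Hv.
        exists 1%g; first exact: group1.
        apply: LP_fix; first by apply: hB; apply: BdB.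
        by move=> w A; apply: hB; apply: nbr A.
      have [p pF Lp] := good v Hv.
      have Hhv : ~ List.In (h v) Bd.
        move=> Hh; apply: Hv.
        have := hB _ (BdB _ Hh) => /(aut_inj haut) <-; exact: Hh.
      have [r rF Lr] := good _ Hhv.
      have [q qF Lq] := kU.2 (g v).
      exists (p * q * r^-1)%g; first by rewrite !groupM ?groupV.
      apply: (LP_conj1 gA') => //; first by move=> y w A; exact: (proj1 (haut.2 y w) A).
      by move=> y; rewrite /h gKV.
      exact: Lq.
    exists h.
      split; last by move=> v Hv; apply: hB.
      by apply: HS0 => // v Hv; apply: hB; apply/List.in_app_iff; left.
    by move=> v; rewrite /h gKV.
  + move=> [h [hK hB] Ekh].
    have hU := KU _ hK.
    have haut : is_aut adj h := hU.1.
    have hA : forall y w, adj y w -> adj (h y) (h w) by move=> y w A; exact: (proj1 (haut.2 y w) A).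
    have kB : agree_on k (fun v => v) (List.map g B).
      move=> w /List.in_map_iff [v [<- Hv]]; by rewrite Ekh hB.
    have kaut : is_aut adj k.
      apply: (@aut_ext _ (fun w => g (h (ginv w)))).
        by move=> w; rewrite -{1}(gKV w) Ekh.
      apply: aut_comp => //; apply: aut_comp => //; exact: aut_inv gK gKV.
    have kU : U_ adj c F k.
      split => // w; rewrite -(gKV w); set v := ginv w.
      have [p pF' Lp] := gF' v.
      case: (classic (List.In v Bd)) => Hv.
        have hv : h v = v by apply: hB; apply: BdB.
        exists (p^-1 * 1 * p)%g; first by rewrite mulg1 mulVg group1.
        apply: (LP_conj2 gR gKV hA Ekh Lp); first by rewrite hv.
        apply: LP_fix => // y A; apply: hB; exact: nbr A.
      have [p1 pF Lp1] := good v Hv.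
      have Hhv : ~ List.In (h v) Bd.
        move=> Hh; apply: Hv.
        have := hB _ (BdB _ Hh) => /(aut_inj haut) <-; exact: Hh.
      have [r rF Lr] := good _ Hhv.
      have [s sF Ls] := hU.2 v.
      exists (p1^-1 * s * r)%g; first by rewrite !groupM ?groupV.
      exact: (LP_conj2 gR gKV hA Ekh Lp1).
    split => //.
    apply: HS0 => // w Hw.
    rewrite -(gKV w) Ekh hB //.
    by apply/List.in_app_iff; right; apply/List.in_app_iff; left; apply: List.in_map.
Qed.

End Tree.

Local Open Scope group_scope.
Theorem proposition1p8
  (Omega : finType) (V : Type) (adj : V -> V -> Prop) (c : V -> V -> Omega)
  (HV : inhabited V) (Htree : is_tree adj) (Hcol : legal_coloring adj c)
  (Hd : (3 <= #|Omega|)%N)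
  (F F' : {group {perm Omega}})
  (HFF' : F \subset F') (HF'hat : F' \subset hatF F)
  (Hnorm : forall a : Omega,
      'N_('C_F'[a | 'P])('C_F[a | 'P]) = 'C_F[a | 'P])
  (K : (V -> V) -> Prop)
  (HKsub : subgroup_of (U_ adj c F) K)
  (HKopen : open_in (U_ adj c F) K)
  (HKcpt : compact K) :
  forall g : V -> V, Comm (U_ adj c F') K g <-> G2_ adj c F F' g.
Proof. exact: (main Htree Hcol HV HFF' HF'hat Hnorm HKsub HKopen). Qed.
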